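(* Let $A,p$ be real numbers with $0<A<p$. Let $\rho:(0,\infty)\to(0,\infty)$ be increasing with $x\mapsto\rho(x)/x^A$ decreasing, and let $(a_n)_{n\ge1}$ be a decreasing sequence of nonnegative numbers such that $$\sum_{n\ge1}h(a_n)\le\sum_{n\ge1}h(1/\rho(n))$$ for every increasing function $h:[0,\infty)\to[0,\infty)$ with $h(0)=0$ for which $t\mapsto h(t^p)$ is convex. Then there is a constant $C(p,A)$ depending only on $p$ and $A$ such that $a_n\le C(p,A)/\rho(n)$ for all $n\ge1$. *)

(* Defs.v *)
From mathcomp Require Import all_boot all_order all_algebra.
From mathcomp Require Import all_classical all_reals all_analysis.
Set Implicit Arguments. Unset Strict Implicit. Unset Printing Implicit Defensive.
Import Order.TTheory GRing.Theory Num.Theory.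
Local Open Scope ring_scope.

Definition admissible_h (R : realType) (p : R) (h : R -> R) : Prop :=
  [/\ h 0 = 0,
      (forall x, 0 <= x -> 0 <= h x),
      (forall x y, 0 <= x -> x <= y -> h x <= h y) &
      (forall s t l, 0 <= s -> 0 <= t -> 0 <= l -> l <= 1 ->
         h ((l * s + (1 - l) * t) `^ p) <= l * h (s `^ p) + (1 - l) * h (t `^ p))].

Definition admissible_rho (R : realType) (A : R) (rho : R -> R) : Prop :=
  [/\ (forall x, 0 < x -> 0 < rho x),
      (forall x y, 0 < x -> x <= y -> rho x <= rho y) &
      (forall x y, 0 < x -> x <= y -> rho y / y `^ A <= rho x / x `^ A)].

Definition admissible_seq (R : realType) (a : nat -> R) : Prop :=
  (forall n, (1 <= n)%N -> 0 <= a n) /\ (forall n, (1 <= n)%N -> a n.+1 <= a n).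

(* Main.v *)
Require Import Defs.
From mathcomp Require Import all_boot all_order all_algebra.
From mathcomp Require Import all_classical all_reals all_analysis.
From mathcomp Require Import ring lra.
Import Order.TTheory GRing.Theory Num.Theory.
Local Open Scope ring_scope.

Lemma bern (R : realType) (b x : R) : 0 < b -> b < 1 -> 0 <= x -> x <= 1 ->
  (1 - x) `^ b <= 1 - b * x.
Proof.
move=> b0 b1 x0 x1.
have x1' : 0 <= 1 - x by lra.
have := @conjugate_powR R ((1 - x) `^ b) 1 b^-1 (1 - b)^-1 (powR_ge0 _ _) ler01.
rewrite invr_gt0 b0 invr_gt0 subr_gt0 b1 => /(_ isT isT).
rewrite !invrK.
have -> : b + (1 - b) = 1 by ring.
move=> /(_ erefl).
rewrite mulr1 -powRrM mulfV ?gt_eqF // powRr1 // powR1.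
move=> H; apply: (le_trans H); lra.
Qed.

Lemma sum_bound (R : realType) (al : R) : 0 < al -> al < 1 -> forall N : nat,
  \sum_(1 <= k < N.+1) (k%:R `^ (- al)) <= (N%:R `^ (1 - al)) / (1 - al).
Proof.
move=> a0 a1; set b := 1 - al.
have b0 : 0 < b by rewrite /b; lra.
have b1 : b < 1 by rewrite /b; lra.
elim=> [|N IH].
  by rewrite big_geq // powR0 ?mul0r // gt_eqF.
rewrite big_nat_recr //=.
set M := N.+1%:R.
have M0 : 0 < M by rewrite /M ltr0Sn.
have hN : N%:R = M * (1 - M^-1) by rewrite mulrBr mulr1 mulfV ?gt_eqF // /M -natr1; ring.
have hM : M `^ (- al) = M `^ b / M.
  have -> : - al = b + (-1) by rewrite /b; ring.
  rewrite powRD; last by apply/implyP => _; rewrite gt_eqF.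
  by rewrite powRN powRr1 // ltW.
have Mi1 : M^-1 <= 1 by rewrite invf_le1 // /M ler1n.
have Mi0 : 0 <= M^-1 by rewrite invr_ge0 ltW.
have key : N%:R `^ b <= M `^ b - b * (M `^ b / M).
  rewrite hN powRM ?(ltW M0) //; last by rewrite subr_ge0.
  have H := @bern R b M^-1 b0 b1 Mi0 Mi1.
  have Mb0 : 0 <= M `^ b := powR_ge0 _ _.
  apply: le_trans (ler_wpM2l Mb0 H) _; rewrite le_eqVlt; apply/orP; left; apply/eqP; rewrite mulrBr mulr1; ring.
rewrite hM.
apply: le_trans (lerD IH (lexx _)) _.
rewrite ler_pdivlMr // mulrDl divfK ?gt_eqF //.
by rewrite mulrC -lerBrDr.
Qed.

Lemma dec_le (R : realType) (a : nat -> R) : admissible_seq a ->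
  forall k N, (1 <= k)%N -> (k <= N)%N -> a N <= a k.
Proof.
move=> [_ ha] k N k1 /subnK <-.
elim: (N - k)%N => [|d IH]; first by rewrite add0n.
rewrite addSn; apply: le_trans (ha _ _) IH.
by rewrite (leq_trans k1) // leq_addl.
Qed.

Theorem lemma2p2 (R : realType) (A p : R) (hA : 0 < A) (hAp : A < p) :
  exists C : R, forall (rho : R -> R) (a : nat -> R),
    admissible_rho A rho ->
    admissible_seq a ->
    (forall h : R -> R, admissible_h p h ->
       (\sum_(1 <= n <oo) ((h (a n))%:E) <=
        \sum_(1 <= n <oo) ((h (rho n%:R)^-1)%:E))%E) ->
    forall n : nat, (1 <= n)%N -> a n <= C / rho n%:R.
Proof.
have p0 : 0 < p by apply: lt_trans hAp.
pose q := p^-1.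
have q0 : 0 < q by rewrite invr_gt0.
pose al := A * q.
have al0 : 0 < al by rewrite mulr_gt0.
have al1 : al < 1 by rewrite /al /q ltr_pdivrMr // mul1r.
have b0 : 0 < 1 - al by rewrite subr_gt0.
pose K := 1 + (1 - al)^-1.
exists (K `^ p).
move=> rho a [rho0 rhoinc rhodec] aseq hyp N N1.
have N0 : 0 < N%:R :> R by rewrite ltr0n.
have rN0 := rho0 _ N0.
pose c := (rho N%:R)^-1 `^ q.
have c0 : 0 <= c := powR_ge0 _ _.
pose h := fun x : R => Num.max (x `^ q - c) 0.
have h0 x : 0 <= h x by rewrite /h le_max lexx orbT.
have hmono x y : 0 <= x -> x <= y -> h x <= h y.
  move=> x0 xy; rewrite /h ge_max; apply/andP; split; last by rewrite le_max lexx orbT.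
  rewrite le_max; apply/orP; left.
  rewrite lerD2r; apply: ge0_ler_powR => //; first exact: ltW.
  by rewrite nnegrE; apply: (le_trans x0).
have hadm : admissible_h p h.
  split.
  - by rewrite /h powR0 ?gt_eqF // sub0r max_r // oppr_le0.
  - by move=> x _.
  - exact: hmono.
  - move=> s t l s0 t0 l0 l1.
    have pw v : 0 <= v -> (v `^ p) `^ q = v.
      by move=> v0; rewrite -powRrM mulfV ?gt_eqF // powRr1.
    have l1' : 0 <= 1 - l by rewrite subr_ge0.
    have cv0 : 0 <= l * s + (1 - l) * t by rewrite addr_ge0 // mulr_ge0.
    rewrite /h (pw s) // (pw t) // (pw _ cv0).
    rewrite ge_max; apply/andP; split; last by rewrite addr_ge0 // mulr_ge0 // le_max lexx orbT.
    have -> : l * s + (1 - l) * t - c = l * (s - c) + (1 - l) * (t - c) by ring.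
    by rewrite lerD // ler_wpM2l // le_max lexx.
have H := hyp h hadm.
have aN0 : 0 <= a N by case: aseq => + _; apply.
have lower : ((N%:R * h (a N))%:E <= \sum_(1 <= n <oo) (h (a n))%:E)%E.
  have := @nneseries_lim_ge R (fun n => (h (a n))%:E) xpredT 1 N.+1
    (fun n _ _ => (ltac:(by rewrite lee_fin))).
  apply: le_trans.
  rewrite sumEFin lee_fin.
  apply: le_trans (_ : \sum_(1 <= i < N.+1) h (a N) <= _).
    by rewrite sumr_const_nat subn1 /= mulr_natl.
  apply: ler_sum_nat => i /andP[i1 iN].
  by apply: hmono => //; apply: dec_le.
have tail0 k : (N <= k)%N -> h (rho k%:R)^-1 = 0.
  move=> Nk; have k0 : 0 < k%:R :> R by rewrite ltr0n (leq_trans N1).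
  rewrite /h max_r // subr_le0; apply: ge0_ler_powR; first exact: ltW.
  - by rewrite nnegrE invr_ge0 ltW // rho0.
  - by rewrite nnegrE invr_ge0 ltW.
  rewrite lef_pV2 ?posrE ?rho0 //.
  by apply: rhoinc => //; rewrite ler_nat.
have upper : (\sum_(1 <= n <oo) (h (rho n%:R)^-1)%:E <=
              (\sum_(1 <= k < N) h (rho k%:R)^-1)%:E)%E.
  rewrite (@nneseries_split R (fun n => (h (rho n%:R)^-1)%:E) 1 (N - 1)); last first.
    by move=> k _; rewrite lee_fin.
  rewrite subnKC //.
  rewrite (_ : \big[+%E/0%E]_(N <= i <oo) (h (rho i%:R)^-1)%:E = 0%E).
    by rewrite adde0 sumEFin.
  apply: (@eseries0 R (fun n => (h (rho n%:R)^-1)%:E) N xpredT).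
  by move=> i Ni _; rewrite tail0.
have term k : (1 <= k)%N -> (k <= N)%N ->
    h (rho k%:R)^-1 <= c * N%:R `^ al * k%:R `^ (- al).
  move=> k1 kN; have k0 : 0 < k%:R :> R by rewrite ltr0n.
  have rk0 := rho0 _ k0.
  have kA0 : 0 < k%:R `^ A := powR_gt0 _ k0.
  have NA0 : 0 < N%:R `^ A := powR_gt0 _ N0.
  apply: (@le_trans _ _ ((rho k%:R)^-1 `^ q)).
    by rewrite /h ge_max powR_ge0 andbT lerBlDr lerDl.
  have e1 : (rho k%:R)^-1 = (rho k%:R / k%:R `^ A)^-1 * k%:R `^ (- A).
    by rewrite powRN; field; rewrite gt_eqF // ?gt_eqF.
  have e2 : c * N%:R `^ al * k%:R `^ (- al) =
      ((rho N%:R / N%:R `^ A)^-1 * k%:R `^ (- A)) `^ q.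
    rewrite powRM ?invr_ge0 ?divr_ge0 ?powR_ge0 ?ltW //.
    rewrite invf_div powRM ?invr_ge0 ?powR_ge0 ?ltW // -!powRrM mulNr /c /al.
    by rewrite [X in X * _]mulrC.
  rewrite e1 e2; apply: ge0_ler_powR; first exact: ltW.
  - by rewrite nnegrE mulr_ge0 ?invr_ge0 ?divr_ge0 ?powR_ge0 ?ltW.
  - by rewrite nnegrE mulr_ge0 ?invr_ge0 ?divr_ge0 ?powR_ge0 ?ltW.
  rewrite ler_wpM2r ?powR_ge0 // lef_pV2 ?posrE ?divr_gt0 //.
  by apply: rhodec => //; rewrite ler_nat.
have sumb : \sum_(1 <= k < N) h (rho k%:R)^-1 <= c * N%:R / (1 - al).
  apply: (@le_trans _ _ (\sum_(1 <= k < N) c * N%:R `^ al * k%:R `^ (- al))).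
    apply: ler_sum_nat => k /andP[k1 kN]; apply: term => //; exact: ltnW.
  rewrite -mulr_sumr.
  apply: (@le_trans _ _ (c * N%:R `^ al * (N%:R `^ (1 - al) / (1 - al)))).
    rewrite ler_wpM2l ?mulr_ge0 ?powR_ge0 //.
    apply: le_trans (@sum_bound R al al0 al1 N).
    by rewrite big_nat_recr //= lerDl powR_ge0.
  rewrite mulrA -(mulrA c) -powRD; last by apply/implyP => _; rewrite gt_eqF.
  by rewrite addrC subrK powRr1 ?ler0n.
have hN : h (a N) <= c / (1 - al).
  have := le_trans lower (le_trans H upper); rewrite lee_fin => H2.
  rewrite -(ler_pM2l N0); apply: (le_trans (le_trans H2 sumb)).
  rewrite le_eqVlt; apply/orP; left; apply/eqP; ring.
have aq : a N `^ q <= c * K.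
  have : a N `^ q - c <= c / (1 - al) by apply: le_trans hN; rewrite /h le_max lexx.
  by rewrite lerBlDr /K mulrDr mulr1 addrC.
have -> : a N = (a N `^ q) `^ p by rewrite -powRrM mulVf ?gt_eqF // powRr1.
apply: (@le_trans _ _ ((c * K) `^ p)).
  by apply: ge0_ler_powR; [exact: ltW | rewrite nnegrE powR_ge0 | rewrite nnegrE mulr_ge0 // addr_ge0 // invr_ge0 ltW |].
have K0 : 0 <= K by rewrite addr_ge0 // invr_ge0 ltW.
have cp : c `^ p = (rho N%:R)^-1.
  by rewrite /c -powRrM mulVf ?gt_eqF // powRr1 // invr_ge0 ltW.
by rewrite powRM // cp mulrC.
Qed.
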